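(* Let $r\ge1$, $\mathbf{m}\in\mathbb{N}^r$, $m=m_1+\cdots+m_r$, $\mathbf{f}\in\mathbb{C}^r$ and $a,b,c\in\mathbb{C}$ with $(c-a-m)_{m}\ne0$, $(c-b-m)_{m}\ne0$, $(1+a+b-c)_m\ne0$. Put $C_{k,r}=\frac{(-1)^k}{k!}{}_{r+1}F_{r}\!\left(\begin{matrix}-k,\mathbf{f}+\mathbf{m}\\\mathbf{f}\end{matrix}\right)$ and $$ \hat{Q}_m(t)=\sum_{k=0}^{m}\frac{(-1)^kC_{k,r}(a)_k(b)_k(t)_k}{(c-a-m)_k(c-b-m)_k}\, {}_{3}F_{2}\!\left(\begin{matrix}-m+k,\,t+k,\,c-a-b-m\\ c-a-m+k,\,c-b-m+k\end{matrix}\right), $$ $$ \hat{P}_m(t)=\sum_{k=0}^m\frac{(-1)^k(a)_k(-b-m)_k(t)_k(c-a-m-t)_{m-k}}{(c-a-m)_m(c-b-m)_k\,k!}\, {}_{r+2}F_{r+1}\!\left(\begin{matrix}-k,b,\mathbf{f}+\mathbf{m}\\ b+m-k+1,\mathbf{f}\end{matrix}\right). $$ Then $\hat{Q}_m(t)=\hat{P}_m(t)$ identically in $t$.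
   Context: $(a)_k=\Gamma(a+k)/\Gamma(a)$. $\mathbf{f}+\mathbf{m}$ is componentwise; a vector among hypergeometric parameters means its components are listed. ${}_pF_q(\mathbf{a};\mathbf{b})$ denotes the terminating generalized hypergeometric series at argument $1$. *)

(* Defs.v *)
From HB Require Import structures.
From mathcomp Require Import all_boot all_order all_algebra.
From mathcomp Require Import complex.
From mathcomp Require Import reals.
Set Implicit Arguments. Unset Strict Implicit. Unset Printing Implicit Defensive.
Import Order.TTheory GRing.Theory Num.Theory.
Local Open Scope ring_scope.

Definition poch {F : ringType} (x : F) (k : nat) : F :=
  \prod_(i < k) (x + i%:R).

(* Terminating generalized hypergeometric series at argument 1,
   summed over n = 0 .. N, where N is the termination index (one numerator
   parameter equals -N, so all terms with n > N vanish). *)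
Definition hypF {F : fieldType} (N : nat) (as_ bs : seq F) : F :=
  \sum_(n < N.+1)
     (\prod_(a <- as_) poch a n) / (\prod_(b <- bs) poch b n) / (n`!)%:R.

(* Main.v *)
Require Import Defs.
From HB Require Import structures.
From mathcomp Require Import all_boot all_order all_algebra.
From mathcomp Require Import complex.
From mathcomp Require Import reals.
From mathcomp Require Import ring zify.
Import Order.TTheory GRing.Theory Num.Theory.
Local Open Scope ring_scope.



Section Poch.
Variable F : numFieldType.
Implicit Types (x y u : F).

Lemma poch0 x : poch x 0 = 1.
Proof. by rewrite /poch big_ord0. Qed.

Lemma pochS x k : poch x k.+1 = poch x k * (x + k%:R).
Proof. by rewrite /poch big_ord_recr. Qed.

Lemma pochSl x k : poch x k.+1 = x * poch (x + 1) k.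
Proof.
rewrite /poch big_ord_recl /= addr0; apply: congr1.
by apply: eq_bigr => i _; rewrite /bump /= add1n -natr1; ring.
Qed.

Lemma pochD x k l : poch x (k + l) = poch x k * poch (x + k%:R) l.
Proof.
elim: l => [|l IH]; first by rewrite addn0 poch0 mulr1.
by rewrite addnS !pochS IH natrD addrA mulrA.
Qed.

Lemma pochD' x k n : (k <= n)%N -> poch x k * poch (x + k%:R) (n - k) = poch x n.
Proof. by move=> kn; rewrite -pochD subnKC. Qed.

Lemma poch_neg_nat (k n : nat) : poch (- k%:R) n = (-1) ^+ n * (k ^_ n)%:R :> F.
Proof.
elim: n => [|n IH]; first by rewrite poch0 ffactn0 expr0 mulr1.
rewrite pochS IH ffactnSr natrM exprS.
case: (leqP n k) => nk.
  rewrite natrB //; ring.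
by rewrite ffact_small // mul0r !mulr0 mul0r.
Qed.

Lemma poch_neg_nat0 (k n : nat) : (k < n)%N -> poch (- k%:R) n = 0 :> F.
Proof. by move=> kn; rewrite poch_neg_nat ffact_small // mulr0. Qed.

Lemma fact_neq0 n : (n`!)%:R != 0 :> F.
Proof. by rewrite pnatr_eq0 -lt0n fact_gt0. Qed.

Lemma poch_neg_nat_fact (k n : nat) :
  poch (- k%:R) n / (n`!)%:R = (-1) ^+ n * ('C(k, n))%:R :> F.
Proof.
rewrite poch_neg_nat -bin_ffact natrM -mulrA mulfK //; exact: fact_neq0.
Qed.

Lemma poch_rev x k : poch (x - k%:R + 1) k = (-1) ^+ k * poch (- x) k.
Proof.
have -> : (-1) ^+ k = \prod_(i < k) (-1 : F) by rewrite prodr_const card_ord.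
rewrite /poch (reindex_inj rev_ord_inj) /= -big_split /=.
apply: eq_bigr => i _.
have ik : (i < k)%N by [].
rewrite natrB; last by lia.
rewrite -natr1. ring.
Qed.

Lemma poch_nz x m j n : poch x m != 0 -> (j + n <= m)%N -> poch (x + j%:R) n != 0.
Proof.
move=> hx le.
move: hx; rewrite -(subnKC le) (pochD x (j + n)) (pochD x j).
by rewrite !mulf_eq0 !negb_or => /andP[/andP[_ ->]].
Qed.

Lemma poch1_nz n : poch (1 : F) n != 0.
Proof.
apply/prodf_neq0 => i _; rewrite addrC natr1 pnatr_eq0 //.
Qed.

Lemma poch0x n : poch (0 : F) n = (n == 0%N)%:R.
Proof.
case: n => [|n]; first by rewrite poch0.
by rewrite pochSl mul0r.
Qed.

End Poch.

Lemma poch_nz0 (F : numFieldType) (x : F) m n : poch x m != 0 -> (n <= m)%N -> poch x n != 0.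
Proof.
move=> h nm; have := poch_nz _ _ _ 0 n h; rewrite addr0; apply; lia.
Qed.



Section Sums.
Variable F : numFieldType.
Implicit Types (x y u : F).

Lemma sum_widen (N M : nat) (G : nat -> F) : (N <= M)%N ->
  (forall i, (N <= i)%N -> (i < M)%N -> G i = 0) ->
  \sum_(i < M) G i = \sum_(i < N) G i.
Proof.
move=> le h; rewrite -!(big_mkord xpredT) (big_cat_nat (leq0n N) le) /=.
suff -> : \sum_(N <= i < M) G i = 0 by rewrite addr0.
rewrite big_nat_cond big1 // => i /andP[/andP[a b] _]; exact: h.
Qed.

Lemma sum_shift (j M : nat) (G : nat -> F) : (j <= M)%N ->
  (forall i, (i < j)%N -> G i = 0) ->
  \sum_(i < M) G i = \sum_(i < M - j) G (j + i)%N.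
Proof.
move=> le h; rewrite -!(big_mkord xpredT) (big_cat_nat (leq0n j) le) /=.
have -> : \sum_(0 <= i < j) G i = 0.
  rewrite big_nat_cond big1 // => i /andP[/andP[_ b] _]; exact: h.
rewrite add0r.
rewrite -{1}(add0n j) big_addn big_mkord.
by apply: eq_bigr => i _; rewrite addnC.
Qed.

Lemma V (N : nat) (u y : F) : poch (y - u) N =
  \sum_(s < N.+1) ('C(N, s))%:R * (-1) ^+ s * poch u s * poch (y + s%:R) (N - s).
Proof.
elim: N y => [|N IH] y.
  by rewrite big_ord_recl big_ord0 /= !poch0 bin0 expr0 !mulr1 addr0.
rewrite pochSl (_ : y - u + 1 = (y + 1) - u); last by ring.
rewrite IH mulr_sumr.
pose T := fun s : nat => (-1) ^+ s * poch u s * poch (y + s%:R) (N.+1 - s).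
have -> : \sum_(s < N.+2) ('C(N.+1, s))%:R * (-1) ^+ s * poch u s * poch (y + s%:R) (N.+1 - s)
   = \sum_(s < N.+2) ('C(N.+1, s))%:R * T s.
  by apply: eq_bigr => s _; rewrite /T !mulrA.
rewrite [RHS]big_ord_recl /= bin0.
have E : forall i : 'I_(N.+1), ('C(N.+1, bump 0 i))%:R * T (bump 0 i) = ('C(N,i))%:R * T i.+1 + ('C(N, i.+1))%:R * T i.+1.
  by move=> i; rewrite /bump /= add1n binS natrD mulrDl addrC.
rewrite (eq_bigr _ (fun i _ => E i)).
rewrite big_split /= addrCA.
have -> : 1 * T 0%N + \sum_(i < N.+1) ('C(N, i.+1))%:R * T i.+1
        = \sum_(i < N.+1) ('C(N, i))%:R * T i.
  rewrite [in LHS]big_ord_recr /= bin_small // mul0r addr0.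
  by rewrite [RHS]big_ord_recl /= bin0.
rewrite -big_split /=; apply: eq_bigr => s _.
have sN : (s <= N)%N by rewrite -ltnS.
rewrite /T subSS subSn // (pochS _ u s) (pochSl _ (y + s%:R)).
rewrite (_ : y + s.+1%:R = y + s%:R + 1); last by rewrite -natr1; ring.
rewrite (_ : y + 1 + s%:R = y + s%:R + 1); last by ring.
rewrite exprS; ring.
Qed.
End Sums.



Lemma binC (k j i : nat) : ('C(k, j + i) * 'C(j + i, j) = 'C(k, j) * 'C(k - j, i))%N.
Proof.
case: (leqP (j + i) k) => h; last first.
  rewrite bin_small //; case: (leqP j k) => hj.
    by rewrite (bin_small (n := k - j) (m := i)) ?muln0 ?mul0n //; lia.
  by rewrite (bin_small hj) !mul0n.
have hj : (j <= k)%N by lia.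
have hi : (i <= k - j)%N by lia.
have fpos : (0 < j`! * i`! * (k - j - i)`!)%N by rewrite !muln_gt0 !fact_gt0.
apply/eqP; rewrite -(eqn_pmul2r fpos); apply/eqP.
have e1 := bin_fact (leq_addr i j); rewrite addKn in e1.
have e2 := bin_fact h; rewrite subnDA in e2.
have e3 := bin_fact hj.
have e4 := bin_fact hi.
transitivity k`!.
  rewrite -e2 -e1; ring.
rewrite -e3 -e4; ring.
Qed.

Section VJ.
Variable F : numFieldType.

Lemma VJ (k j : nat) (u y : F) :
  \sum_(n < k.+1) ('C(k, n))%:R * ('C(n, j))%:R * (-1) ^+ n * poch u n * poch (y + n%:R) (k - n)
  = ('C(k, j))%:R * (-1) ^+ j * poch u j * poch (y - u) (k - j).
Proof.
case: (leqP j k) => jk; last first.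
  rewrite bin_small // !mul0r; apply: big1 => n _.
  have nk : (n < j)%N by apply: (leq_trans (ltn_ord n)).
  by rewrite (bin_small nk) !mulr0 !mul0r.
rewrite (sum_shift _ j (k.+1) (fun n : nat => ('C(k, n))%:R * ('C(n, j))%:R * (-1) ^+ n * poch u n * poch (y + n%:R) (k - n))); first last.
- by move=> i ij; rewrite (bin_small ij) mulr0 !mul0r.
- by apply: leqW.
rewrite subSn // (_ : y - u = (y + j%:R) - (u + j%:R)); last by ring.
rewrite V mulr_sumr; apply: eq_bigr => i _.
rewrite pochD natrD subnDA exprD.
rewrite -natrM binC natrM addrA; ring.
Qed.

Lemma VD (n : nat) (u y : F) : poch y n != 0 ->
  poch (y - u) n / poch y n =
  \sum_(i < n.+1) ('C(n, i))%:R * (-1) ^+ i * poch u i / poch y i.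
Proof.
move=> hy; rewrite V mulr_suml; apply: eq_bigr => i _.
have i_n : (i <= n)%N by rewrite -ltnS.
rewrite -(pochD' _ y _ _ i_n).
have hyi : poch y i != 0.
  by move: hy; rewrite -(pochD' _ y _ _ i_n) mulf_eq0 negb_or => /andP[].
have hyn : poch (y + i%:R) (n - i) != 0.
  by move: hy; rewrite -(pochD' _ y _ _ i_n) mulf_eq0 negb_or => /andP[].
by field; apply/andP.
Qed.

End VJ.



Section KeyR.
Variable F : numFieldType.
Variables (a b c t : F) (m : nat).
Hypothesis hb : poch (b + 1) m != 0.
Hypothesis ha : poch (c - a - m%:R) m != 0.
Hypothesis hc : poch (c - b - m%:R) m != 0.

Definition gg (k n : nat) : F :=
  poch (- k%:R) n * poch b n / (poch (b + m%:R - k%:R + 1) n * (n`!)%:R).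

Lemma B_nz (k n : nat) : (n <= k)%N -> (k <= m)%N -> poch (b + m%:R - k%:R + 1) n != 0.
Proof.
move=> nk km.
have -> : b + m%:R - k%:R + 1 = (b + 1) + (m - k)%:R by rewrite natrB //; ring.
apply: (poch_nz F (b + 1) m (m - k) n hb); lia.
Qed.

Lemma R1 (k j : nat) : (k <= m)%N ->
  \sum_(n < m.+1) gg k n * ('C(n, j))%:R * (j`!)%:R =
  (j`!)%:R * ('C(k, j))%:R * (-1) ^+ j * poch b j * poch (m%:R - k%:R + 1) (k - j)
    / poch (b + m%:R - k%:R + 1) k.
Proof.
move=> km.
rewrite (sum_widen _ k.+1 m.+1 (fun n => gg k n * ('C(n, j))%:R * (j`!)%:R)) //; last first.
  by move=> i ki _; rewrite /gg poch_neg_nat0 // !mul0r.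
set B := b + m%:R - k%:R + 1.
have hBk : poch B k != 0 by apply: B_nz.
have -> : m%:R - k%:R + 1 = B - b by rewrite /B; ring.
rewrite (_ : (j`!)%:R * ('C(k, j))%:R * (-1) ^+ j * poch b j * poch (B - b) (k - j) / poch B k
  = (j`!)%:R / poch B k * (('C(k, j))%:R * (-1) ^+ j * poch b j * poch (B - b) (k - j))); last by ring.
rewrite -VJ mulr_sumr; apply: eq_bigr => n _.
have nk : (n <= k)%N by rewrite -ltnS.
rewrite /gg.
have e := pochD' _ B _ _ nk.
have hBn : poch B n != 0 by move: hBk; rewrite -e mulf_eq0 negb_or => /andP[].
have hBn' : poch (B + n%:R) (k - n) != 0 by move: hBk; rewrite -e mulf_eq0 negb_or => /andP[].
rewrite -e.
have f := poch_neg_nat_fact F k n.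
have hf := fact_neq0 F n.
rewrite -[poch (- k%:R) n](divfK hf) f.
field.
by rewrite hf hBn hBn'.
Qed.


Definition Yk (k : nat) : F :=
  (-1) ^+ k * poch a k * poch (- b - m%:R) k * poch t k * poch (c - a - m%:R - t) (m - k)
    / (poch (c - a - m%:R) m * poch (c - b - m%:R) k * (k`!)%:R).

Definition TT (j : nat) : F :=
  (-1) ^+ j * poch b j / poch (c - a - m%:R) m *
  \sum_(i < (m - j).+1) ('C(m - j, i))%:R * poch a (j + i) * poch t (j + i)
       * poch (c - a - m%:R - t) (m - j - i) / poch (c - b - m%:R) (j + i).

Lemma natid (m' j i : nat) : (j`! * 'C(j + i, j) * m' ^_ i = 'C(m', i) * (j + i)`!)%N.
Proof.
have e1 := bin_fact (leq_addr i j); rewrite addKn in e1.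
rewrite -bin_ffact -e1; ring.
Qed.

Lemma KeyR (j : nat) : (j <= m)%N ->
  \sum_(k < m.+1) Yk k * \sum_(n < m.+1) gg k n * ('C(n, j))%:R * (j`!)%:R = TT j.
Proof.
move=> jm.
under eq_bigr => k _ do rewrite (R1 _ j (leq_ord k)).
pose H (k : nat) : F := (j`!)%:R * ('C(k, j))%:R * poch (m%:R - k%:R + 1) (k - j) / (k`!)%:R
   * (poch a k * poch t k * poch (c - a - m%:R - t) (m - k) / poch (c - b - m%:R) k).
transitivity ((-1) ^+ j * poch b j / poch (c - a - m%:R) m * \sum_(k < m.+1) H k).
  rewrite mulr_sumr; apply: eq_bigr => k _.
  have km := leq_ord k.
  have hz := B_nz k k (leqnn k) km.
  rewrite poch_rev opprD in hz *.
  have hz' : poch (- b - m%:R) k != 0 by move: hz; rewrite mulf_eq0 negb_or => /andP[].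
  rewrite /Yk /H.
  have hf := fact_neq0 F k.
  field.
  have hbk : poch (c - b - m%:R) k != 0 by apply: poch_nz0 hc km.
  by rewrite hbk hf ha hz' expf_neq0 // oppr_eq0 oner_eq0.
rewrite /TT; congr (_ * _).
rewrite (sum_shift _ j m.+1 H); first last.
- by move=> i ij; rewrite /H bin_small // mulr0 !mul0r.
- by apply: leqW.
rewrite subSn //; apply: eq_bigr => i _.
rewrite /H subnDA addKn.
have -> : m%:R - (j + i)%:R + 1 = (m - j)%:R - i%:R + 1 :> F.
  by rewrite natrD natrB //; ring.
rewrite poch_rev poch_neg_nat [(-1) ^+ i * (_ * _)]mulrA -exprMn mulrN1 opprK expr1n mul1r.
have e := natid (m - j) j i.
have e' : (j`!)%:R * ('C(j + i, j))%:R * ((m - j) ^_ i)%:R = ('C(m - j, i))%:R * ((j + i)`!)%:R :> F.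
  by rewrite -!natrM e.
have hf := fact_neq0 F (j + i).
rewrite (_ : (j`!)%:R * ('C(j + i, j))%:R * ((m - j) ^_ i)%:R / ((j + i)`!)%:R = ('C(m - j, i))%:R :> F).
  by rewrite !mulrA.
by rewrite e' mulfK.
Qed.

End KeyR.



Lemma split_nz (F : numFieldType) (x : F) k n : (k <= n)%N -> poch x n != 0 ->
  poch x k != 0 /\ poch (x + k%:R) (n - k) != 0.
Proof.
move=> kn; rewrite -(pochD' _ x _ _ kn) mulf_eq0 negb_or => /andP[h1 h2]; by split.
Qed.

Lemma sgn2 (F : numFieldType) (i : nat) : (-1) ^+ i * (-1) ^+ i = 1 :> F.
Proof. by rewrite -exprMn mulrN1 opprK expr1n. Qed.

Section KeyL.
Variable F : numFieldType.
Variables (a b c t : F) (m : nat).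
Hypothesis ha : poch (c - a - m%:R) m != 0.
Hypothesis hc : poch (c - b - m%:R) m != 0.

Lemma hyp3 (j : nat) : (j <= m)%N ->
  hypF (m - j) [:: - (m%:R) + j%:R; t + j%:R; c - a - b - m%:R]
                 [:: c - a - m%:R + j%:R; c - b - m%:R + j%:R]
  = \sum_(n < (m - j).+1) \sum_(i < (m - j).+1)
      (-1) ^+ n * ('C(m - j, n))%:R * ('C(n, i))%:R * (-1) ^+ i
      * poch (t + j%:R) n / poch (c - a - m%:R + j%:R) n
      * poch (a + j%:R) i / poch (c - b - m%:R + j%:R) i.
Proof.
move=> jm.
rewrite /hypF; apply: eq_bigr => n _.
have nN : (n <= m - j)%N by rewrite -ltnS.
rewrite !big_cons !big_nil !mulr1.
have -> : - (m%:R) + j%:R = - ((m - j)%:R) :> F by rewrite natrB //; ring.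
have -> : c - a - b - m%:R = (c - b - m%:R + j%:R) - (a + j%:R) by ring.
set y := c - b - m%:R + j%:R.
have hy : poch y n != 0 by apply: (poch_nz _ _ _ j n hc); lia.
have hf := fact_neq0 F n.
rewrite (_ : poch (- (m - j)%:R) n * (poch (t + j%:R) n * poch (y - (a + j%:R)) n)
   / (poch (c - a - m%:R + j%:R) n * poch y n) / (n`!)%:R
   = (poch (- (m - j)%:R) n / (n`!)%:R) * (poch (t + j%:R) n / poch (c - a - m%:R + j%:R) n)
     * (poch (y - (a + j%:R)) n / poch y n)); last by rewrite !invfM; ring.
rewrite poch_neg_nat_fact VD //.
rewrite -(sum_widen _ n.+1 (m - j).+1 (fun i => ('C(n, i))%:R * (-1) ^+ i * poch (a + j%:R) i / poch y i)) //; last first.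
  by move=> i ni _; rewrite bin_small // !mul0r.
rewrite mulr_sumr; apply: eq_bigr => i _.
ring.
Qed.


Lemma KeyL (j : nat) : (j <= m)%N ->
  (-1) ^+ j * poch a j * poch b j * poch t j / (poch (c - a - m%:R) j * poch (c - b - m%:R) j)
  * hypF (m - j) [:: - (m%:R) + j%:R; t + j%:R; c - a - b - m%:R]
                 [:: c - a - m%:R + j%:R; c - b - m%:R + j%:R]
  = TT _ a b c t m j.
Proof.
move=> jm.
have hαj : poch (c - a - m%:R) j != 0 by apply: poch_nz0 ha jm.
have hβj : poch (c - b - m%:R) j != 0 by apply: poch_nz0 hc jm.
have hαN : poch (c - a - m%:R + j%:R) (m - j) != 0.
  by apply: (poch_nz _ _ _ j (m - j) ha); lia.
rewrite hyp3 // exchange_big /= mulr_sumr /TT mulr_sumr; apply: eq_bigr => i _.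
have iN : (i <= m - j)%N by rewrite -ltnS.
have hβi : poch (c - b - m%:R + j%:R) i != 0 by apply: (poch_nz _ _ _ j i hc); lia.
have inner : \sum_(n < (m - j).+1)
      (-1) ^+ n * ('C(m - j, n))%:R * ('C(n, i))%:R * (-1) ^+ i
      * poch (t + j%:R) n / poch (c - a - m%:R + j%:R) n
      * poch (a + j%:R) i / poch (c - b - m%:R + j%:R) i
  = (-1) ^+ i * poch (a + j%:R) i / poch (c - b - m%:R + j%:R) i
      / poch (c - a - m%:R + j%:R) (m - j)
    * (('C(m - j, i))%:R * (-1) ^+ i * poch (t + j%:R) i * poch (c - a - m%:R - t) (m - j - i)).
  rewrite (_ : c - a - m%:R - t = (c - a - m%:R + j%:R) - (t + j%:R)); last by ring.
  rewrite -VJ mulr_sumr; apply: eq_bigr => n _.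
  have nN : (n <= m - j)%N by rewrite -ltnS.
  have [h1 h2] := split_nz _ _ _ _ nN hαN.
  rewrite -(pochD' _ _ _ _ nN).
  field.
  by rewrite h1 h2 hβi.
rewrite inner.
rewrite -(pochD' _ (c - a - m%:R) _ _ jm) -(pochD' _ (c - b - m%:R) _ _ (leq_addr i j))
        -(pochD' _ a _ _ (leq_addr i j)) -(pochD' _ t _ _ (leq_addr i j)) !addKn.
rewrite -[RHS]mul1r -[X in _ = X * _](sgn2 F i).
field.
by rewrite hαj hαN hβj hβi.
Qed.

End KeyL.



Lemma alt_sum (F : numFieldType) (M n l : nat) : (n <= M)%N ->
  \sum_(j < M.+1) ('C(n, j))%:R * ('C(j, l))%:R * (-1) ^+ j = (-1) ^+ l * (n == l)%:R :> F.
Proof.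
move=> nM.
rewrite (sum_widen _ n.+1 M.+1 (fun j => ('C(n, j))%:R * ('C(j, l))%:R * (-1) ^+ j : F)) //; last first.
  by move=> j nj _; rewrite bin_small // !mul0r.
have h1 := poch1_nz F n.
apply: (mulfI h1).
have := VJ F n l 1 1.
rewrite subrr poch0x.
rewrite (eq_bigr (fun j : 'I_n.+1 => poch 1 n * (('C(n, j))%:R * ('C(j, l))%:R * (-1) ^+ j))); last first.
  move=> j _; have jn : (j <= n)%N by rewrite -ltnS.
  by rewrite -(pochD' _ 1 _ _ jn); ring.
rewrite -mulr_sumr => ->.
case: (ltngtP n l) => nl.
- by rewrite bin_small // !mul0r !mulr0.
- by rewrite subn_eq0 leqNgt nl /= !mulr0.
- by rewrite nl binn subnn eqxx; ring.
Qed.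

Lemma inversion (F : numFieldType) (P : nat -> F) (M n : nat) : (n <= M)%N ->
  \sum_(j < M.+1) ('C(n, j))%:R * (j`!)%:R *
     ((-1) ^+ j / (j`!)%:R * \sum_(l < M.+1) poch (- j%:R) l / (l`!)%:R * P l) = P n.
Proof.
move=> nM.
transitivity (\sum_(j < M.+1) \sum_(l < M.+1) P l * (-1) ^+ l * (('C(n, j))%:R * ('C(j, l))%:R * (-1) ^+ j)).
  apply: eq_bigr => j _; rewrite !mulr_sumr; apply: eq_bigr => l _.
  have hf := fact_neq0 F j.
  have hl := fact_neq0 F l.
  rewrite -[poch (- j%:R) l](divfK hl) poch_neg_nat_fact.
  field.
  by rewrite hf hl.
rewrite exchange_big /=.
under eq_bigr => l _ do rewrite -mulr_sumr alt_sum //.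
rewrite (bigD1 (Ordinal (n := M.+1) (m := n) nM)) //= big1 ?addr0.
  by rewrite eqxx mulr1 -mulrA sgn2 mulr1.
move=> l /eqP hl.
have -> : (n == l) = false.
  apply/eqP => e; apply: hl; apply: val_inj => /=; by rewrite e.
by rewrite !mulr0.
Qed.



Theorem corollary2 (R : realType) (r : nat) (mm : 'I_r -> nat) (f : 'I_r -> R[i])
  (a b c : R[i]) :
  (0 < r)%N ->
  let m := (\sum_(i < r) mm i)%N in
  poch (c - a - m%:R) m != 0 ->
  poch (c - b - m%:R) m != 0 ->
  poch (1 + a + b - c) m != 0 ->
  (* implicit well-definedness of the displayed hypergeometric series *)
  (forall i : 'I_r, poch (f i) m != 0) ->
  poch (b + 1) m != 0 ->
  let fpm := [seq f i + (mm i)%:R | i : 'I_r] in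
  let fs := [seq f i | i : 'I_r] in
  let C := fun k : nat =>
    (-1) ^+ k / (k`!)%:R * hypF k (- k%:R :: fpm) fs in
  forall t : R[i],
    \sum_(k < m.+1)
      (-1) ^+ k * C k * poch a k * poch b k * poch t k
        / (poch (c - a - m%:R) k * poch (c - b - m%:R) k)
        * hypF (m - k) [:: - (m%:R) + k%:R; t + k%:R; c - a - b - m%:R]
                       [:: c - a - m%:R + k%:R; c - b - m%:R + k%:R]
    =
    \sum_(k < m.+1)
      (-1) ^+ k * poch a k * poch (- b - m%:R) k * poch t k
        * poch (c - a - m%:R - t) (m - k)
        / (poch (c - a - m%:R) m * poch (c - b - m%:R) k * (k`!)%:R)
        * hypF k (- k%:R :: b :: fpm) (b + m%:R - k%:R + 1 :: fs).
Proof.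
move=> _ m ha hc _ _ hb fpm fs C t.
set F := R[i].
pose P := fun n : nat => (\prod_(x <- fpm) poch x n) / (\prod_(y <- fs) poch y n).
have hC : forall k, (k <= m)%N ->
    C k = (-1) ^+ k / (k`!)%:R * \sum_(l < m.+1) poch (- k%:R) l / (l`!)%:R * P l.
  move=> k km; rewrite /C /hypF; congr (_ * _).
  rewrite (sum_widen _ k.+1 m.+1 (fun l => poch (- k%:R) l / (l`!)%:R * P l)) //; last first.
    by move=> l kl _; rewrite poch_neg_nat0 // !mul0r.
  by apply: eq_bigr => l _; rewrite big_cons /P; ring.
have hG : forall k, (k <= m)%N ->
    hypF k (- k%:R :: b :: fpm) (b + m%:R - k%:R + 1 :: fs)
    = \sum_(n < m.+1) gg _ b m k n * P n.
  move=> k km; rewrite /hypF.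
  rewrite (sum_widen _ k.+1 m.+1 (fun n => gg _ b m k n * P n)) //; last first.
    by move=> l kl _; rewrite /gg poch_neg_nat0 // !mul0r.
  by apply: eq_bigr => n _; rewrite !big_cons /P /gg !invfM; ring.
have hP : forall n, (n <= m)%N ->
    P n = \sum_(j < m.+1) ('C(n, j))%:R * (j`!)%:R * C j.
  move=> n nm; rewrite -[LHS](inversion _ P _ _ nm); apply: eq_bigr => j _.
  by rewrite hC // -ltnS.
transitivity (\sum_(j < m.+1) C j * TT _ a b c t m j).
  apply: eq_bigr => j _.
  have jm : (j <= m)%N by rewrite -ltnS.
  rewrite -(KeyL _ a b c t m ha hc j jm); ring.
symmetry.
transitivity (\sum_(k < m.+1) \sum_(n < m.+1) \sum_(j < m.+1)
     C j * (Yk _ a b c t m k * (gg _ b m k n * ('C(n, j))%:R * (j`!)%:R))).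
  apply: eq_bigr => k _.
  rewrite hG; last by rewrite -ltnS.
  rewrite mulr_sumr; apply: eq_bigr => n _.
  rewrite hP; last by rewrite -ltnS.
  rewrite !mulr_sumr; apply: eq_bigr => j _.
  rewrite /Yk; ring.
under eq_bigr => k _ do rewrite exchange_big /=.
rewrite exchange_big /=.
apply: eq_bigr => j _.
have jm : (j <= m)%N by rewrite -ltnS.
rewrite -(KeyR _ a b c t m hb ha hc j jm) mulr_sumr; apply: eq_bigr => k _.
by rewrite !mulr_sumr.
Qed.
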